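(* Let $\mathfrak{s}=\bigoplus\mathfrak{s}^p$ be a grading of depth one of a simple Lie superalgebra. Any graded subalgebra $\mathfrak{s}\subset\mathfrak{g}\subset\mathrm{der}(\mathfrak{s})$ is of the form $\mathfrak{g}=\mathfrak{s}\rtimes F$ for some graded subalgebra $F=\mathfrak{g}\cap\mathrm{out}(\mathfrak{s})$ of $\mathrm{out}(\mathfrak{s})$ and it is a transitive nonlinear $\mathbb{Z}$-graded Lie superalgebra. Moreover it is of depth one and irreducible if and only if the depth $d(F)\leq 0$ (i.e. $F$ is graded in nonnegative degrees).
   Context: $\mathfrak{s}$ is a finite-dimensional complex simple Lie superalgebra, $\mathrm{der}(\mathfrak{s})=\mathfrak{s}\rtimes\mathrm{out}(\mathfrak{s})$ (semidirect sum, $\mathfrak{s}$ the ideal, $\mathrm{out}(\mathfrak{s})$ a subalgebra of outer derivations, stable under the grading), with the grading induced by that of $\mathfrak{s}$. A $\mathbb{Z}$-graded Lie superalgebra $\mathfrak{g}=\bigoplus\mathfrak{g}^p$ is transitive if $x\in\mathfrak{g}^p$, $p\ge0$, $[x,\mathfrak{g}^{-1}]=0$ implies $x=0$; irreducible if $\mathfrak{g}^0$ acts irreducibly on $\mathfrak{g}^{-1}$; nonlinear if $\mathfrak{g}^1\neq0$. *)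

(* Defs.v *)
From HB Require Import structures.
From mathcomp Require Import all_boot all_order all_algebra.
From mathcomp.real_closed Require Export complex.
From mathcomp Require Export reals.
Set Implicit Arguments. Unset Strict Implicit. Unset Printing Implicit Defensive.
Import Order.TTheory GRing.Theory Num.Theory.
Local Open Scope ring_scope.

(* A Lie superalgebra structure on a finite-dimensional C-vector space V is
   given by a parity splitting V = V0 (+) V1 and the adjoint map
   ad : V -> End(V), so that the bracket is [x, y] := ad x y (bilinear). *)
Section LieSuper.
Variables (C : fieldType) (V : vectType C).
Variables (V0 V1 : {vspace V}) (ad : 'Hom(V, 'End(V))).

Definition par (a : bool) : {vspace V} := if a then V1 else V0.
Definition sgn (a b : bool) : C := (-1) ^+ (a && b).

Definition is_lie_superalgebra : Prop :=
  [/\ directv (V0 + V1)%VS, (V0 + V1)%VS = fullv,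
      (forall a b x y, x \in par a -> y \in par b -> ad x y \in par (a (+) b)),
      (forall a b x y, x \in par a -> y \in par b ->
          ad x y = - (sgn a b *: ad y x)) &
      (forall a b x y z, x \in par a -> y \in par b ->
          ad x (ad y z) = ad (ad x y) z + sgn a b *: ad y (ad x z))].

Definition graded_ideal (I : {vspace V}) : Prop :=
  I = (I :&: V0 + I :&: V1)%VS /\ (forall x y, y \in I -> ad x y \in I).

Definition simple_lie_superalgebra : Prop :=
  [/\ is_lie_superalgebra, (exists x y, ad x y != 0) &
      forall I, graded_ideal I -> I = 0%VS \/ I = fullv].

Definition Zgrading (gr : int -> {vspace V}) : Prop :=
  [/\ exists N : nat, [/\ forall p, (N < `|p|)%N -> gr p = 0%VS,
         (\sum_(i < N.*2.+1) gr (i%:Z - N%:Z))%VS = fullv &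
         directv (\sum_(i < N.*2.+1) gr (i%:Z - N%:Z))%VS],
      (forall p, gr p = (gr p :&: V0 + gr p :&: V1)%VS) &
      (forall p q x y, x \in gr p -> y \in gr q -> ad x y \in gr (p + q))].

Definition depth_one_grading (gr : int -> {vspace V}) : Prop :=
  (forall p, p < -1 -> gr p = 0%VS) /\ gr (-1) != 0%VS.

Definition P0 : 'End(V) := daddv_pi V0 V1.
Definition P1 : 'End(V) := daddv_pi V1 V0.
Definition evpart (D : 'End(V)) : 'End(V) :=
  (P0 \o D \o P0)%VF + (P1 \o D \o P1)%VF.
Definition odpart (D : 'End(V)) : 'End(V) :=
  (P0 \o D \o P1)%VF + (P1 \o D \o P0)%VF.

(* the supercommutator on End(V), extended bilinearly from homogeneous parts *)
Definition sbr (D E : 'End(V)) : 'End(V) :=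
  ((evpart D \o evpart E)%VF - (evpart E \o evpart D)%VF) +
  ((evpart D \o odpart E)%VF - (odpart E \o evpart D)%VF) +
  ((odpart D \o evpart E)%VF - (evpart E \o odpart D)%VF) +
  ((odpart D \o odpart E)%VF + (odpart E \o odpart D)%VF).

Definition superder (c : bool) (D : 'End(V)) : Prop :=
  (forall a x, x \in par a -> D x \in par (c (+) a)) /\
  (forall a x y, x \in par a ->
     D (ad x y) = ad (D x) y + sgn c a *: ad x (D y)).

Definition is_der (D : 'End(V)) : Prop :=
  superder false (evpart D) /\ superder true (odpart D).

Variable gr : int -> {vspace V}.

Definition derdeg (p : int) (D : 'End(V)) : Prop :=
  forall q x, x \in gr q -> D x \in gr (q + p).

Definition Z2graded (W : {vspace 'End(V)}) : Prop :=
  forall D, D \in W -> evpart D \in W.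

Definition Zgraded (W : {vspace 'End(V)}) : Prop :=
  forall D, D \in W -> exists (M : nat) (c : int -> 'End(V)),
    D = \sum_(i < M.*2.+1) c (i%:Z - M%:Z) /\
    forall p, c p \in W /\ derdeg p (c p).

Definition subalg (W : {vspace 'End(V)}) : Prop :=
  forall D E, D \in W -> E \in W -> sbr D E \in W.

Definition graded_subalg (W : {vspace 'End(V)}) : Prop :=
  [/\ Z2graded W, Zgraded W & subalg W].

(* out(s): a graded subalgebra with der(s) = ad(s) (+) out(s) *)
Definition outer_complement (out : {vspace 'End(V)}) : Prop :=
  [/\ forall D, is_der D <-> exists x o, o \in out /\ D = ad x + o,
      (limg ad :&: out = 0)%VS & graded_subalg out].

Definition transitive_sub (g : {vspace 'End(V)}) : Prop :=
  forall p D, 0 <= p -> D \in g -> derdeg p D ->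
    (forall E, E \in g -> derdeg (-1) E -> sbr D E = 0) -> D = 0.

Definition nonlinear_sub (g : {vspace 'End(V)}) : Prop :=
  exists D, [/\ D \in g, derdeg 1 D & D != 0].

Definition depth_one_sub (g : {vspace 'End(V)}) : Prop :=
  (forall p D, p < -1 -> D \in g -> derdeg p D -> D = 0) /\
  exists D, [/\ D \in g, derdeg (-1) D & D != 0].

(* g^0 acts irreducibly on g^{-1}: g^{-1} <> 0 and its only g^0-stable
   graded subspaces are 0 and g^{-1} *)
Definition irreducible_sub (g : {vspace 'End(V)}) : Prop :=
  (exists D, [/\ D \in g, derdeg (-1) D & D != 0]) /\
  forall W : {vspace 'End(V)},
    (forall D, D \in W -> D \in g /\ derdeg (-1) D) ->
    Z2graded W ->
    (forall X D, X \in g -> derdeg 0 X -> D \in W -> sbr X D \in W) ->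
    W = 0%VS \/ (forall D, D \in g -> derdeg (-1) D -> D \in W).

End LieSuper.

(* Main.v *)
Require Import Defs.
From HB Require Import structures.
From mathcomp Require Import all_boot all_order all_algebra.
From mathcomp.real_closed Require Import complex.
From mathcomp Require Import reals.
From mathcomp Require Import zify.
From Stdlib Require Import Classical.
Set Implicit Arguments. Unset Strict Implicit. Unset Printing Implicit Defensive.
Import Order.TTheory GRing.Theory Num.Theory.
Local Open Scope ring_scope.

Section Parity.
#[local] Set Default Proof Using "All".
Variables (K : fieldType) (V : vectType K) (V0 V1 : {vspace V}).
Hypotheses (Hdir : directv (V0 + V1)) (Hfull : (V0 + V1)%VS = fullv).
Local Notation p0 := (P0 V0 V1).
Local Notation p1 := (P1 V0 V1).

Lemma cap01 : (V0 :&: V1 = 0)%VS.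
Proof. exact/directv_addP. Qed.
Lemma cap10 : (V1 :&: V0 = 0)%VS.
Proof. by rewrite capvC cap01. Qed.

Lemma p0_mem v : p0 v \in V0. Proof. exact: memv_pi. Qed.
Lemma p1_mem v : p1 v \in V1. Proof. exact: memv_pi. Qed.
Lemma p0_V0 u : u \in V0 -> p0 u = u. Proof. exact: daddv_pi_id cap01. Qed.
Lemma p1_V1 u : u \in V1 -> p1 u = u. Proof. exact: daddv_pi_id cap10. Qed.
Lemma p01 v : p0 v + p1 v = v.
Proof. by apply: daddv_pi_add cap01 _; rewrite Hfull memvf. Qed.
Lemma p0_V1 u : u \in V1 -> p0 u = 0.
Proof. by move=> h; have := p01 u; rewrite p1_V1 // => /(congr1 (fun t => t - u)); rewrite addrK subrr. Qed.
Lemma p1_V0 u : u \in V0 -> p1 u = 0.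
Proof. by move=> h; have := p01 u; rewrite p0_V0 // => /(congr1 (fun t => t - u)); rewrite addrAC !subrr add0r. Qed.

Lemma indep u w : u \in V0 -> w \in V1 -> u + w = 0 -> u = 0 /\ w = 0.
Proof.
move=> hu hw e; have := congr1 p0 e; rewrite linearD /= p0_V0 // p0_V1 // addr0 linear0 => eu.
by split=> //; move: e; rewrite eu add0r.
Qed.

Definition parb (b : bool) := if b then V1 else V0.
Lemma parE b : par V0 V1 b = parb b. Proof. by []. Qed.

Lemma indepb b u w : u \in parb b -> w \in parb (~~ b) -> u + w = 0 -> u = 0 /\ w = 0.
Proof.
case: b => /= hu hw e; last exact: indep.
by have [] := indep hw hu; rewrite // addrC.
Qed.

Definition ZG (W : {vspace V}) := forall w, w \in W -> p0 w \in W.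

Lemma ZG_p1 W w : ZG W -> w \in W -> p1 w \in W.
Proof. move=> h hw; have <- : w - p0 w = p1 w by rewrite -{1}(p01 w) addrAC subrr add0r.
       exact/memvB/h. Qed.

Lemma ZG_eq W : ZG W -> W = (W :&: V0 + W :&: V1)%VS.
Proof.
move=> h; apply/eqP; rewrite eqEsubv; apply/andP; split.
  apply/subvP=> w hw; rewrite -(p01 w); apply: memv_add.
    by rewrite memv_cap p0_mem h.
  by rewrite memv_cap p1_mem ZG_p1.
by rewrite subv_add !capvSl.
Qed.

Lemma eq_ZG W : W = (W :&: V0 + W :&: V1)%VS -> ZG W.
Proof.
move=> e w; rewrite {1}e => /memv_addP[u hu [v hv ->]].
move: hu hv; rewrite !memv_cap => /andP[hu0 hu1] /andP[hv0 hv1].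
by rewrite linearD /= p0_V0 // p0_V1 // addr0.
Qed.

End Parity.


Section ExVs.
Variables (K : fieldType) (V : vectType K).

Lemma exists_vspace (Q : V -> Prop) : Q 0 -> (forall c u w, Q u -> Q w -> Q (c *: u + w)) ->
  exists U : {vspace V}, forall w, w \in U <-> Q w.
Proof.
move=> Q0 QC.
suff: forall m (U : {vspace V}), (\dim {:V} - \dim U <= m)%N -> (forall w, w \in U -> Q w) ->
   exists U' : {vspace V}, forall w, w \in U' <-> Q w.
  by move=> H; apply: (H _ 0%VS (leq_subr _ _)) => w; rewrite memv0 => /eqP ->.
elim=> [|m IH] U hd hU.
- case: (classic (forall w, Q w -> w \in U)) => [h|]; first by exists U => w; split; [apply: hU|apply: h].
  move/not_all_ex_not => [w hn]; have [qw nw] := imply_to_and _ _ hn; exfalso; apply: nw.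
  have /eqP -> : U == fullv.
    rewrite -(dimv_leqif_eq (subvf U)).2 dimvf eqn_leq; apply/andP; split.
      by rewrite -dimvf; apply: dimvS; apply: subvf.
    by rewrite dimvf in hd; lia.
  by rewrite memvf.
- case: (classic (forall w, Q w -> w \in U)) => [h|]; first by exists U => w; split; [apply: hU|apply: h].
  move/not_all_ex_not => [w hn]; have [qw nw] := imply_to_and _ _ hn.
  have cap0 : (U :&: <[w]> = 0)%VS.
    apply/eqP; rewrite -subv0; apply/subvP => z; rewrite memv_cap memv0 => /andP[hz /vlineP [c ez]].
    apply/eqP; move: hz; rewrite ez; have [->|c0 hz] := eqVneq c 0; first by rewrite scale0r.
    by exfalso; apply: nw; rewrite -(scalerK c0 w) memvZ.
  have w0 : w != 0 by apply/eqP => e; apply: nw; rewrite e mem0v.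
  apply: (IH (U + <[w]>)%VS).
    by rewrite dimv_disjoint_sum // dim_vline w0 addn1 subnS; lia.
  move=> z /memv_addP [u hu [t /vlineP [c ->] ->]].
  by rewrite addrC; apply: QC => //; apply: hU.
Qed.
End ExVs.

Ltac lfsimp' := repeat (rewrite ?add_lfunE ?opp_lfunE ?comp_lfunE ?zero_lfunE ?scale_lfunE ?sum_lfunE).
Ltac lfsimp := repeat (rewrite ?add_lfunE ?opp_lfunE ?comp_lfunE ?zero_lfunE ?scale_lfunE ?sum_lfunE /=).

Section Lie.
#[local] Set Default Proof Using "All".
Variables (K : fieldType) (V : vectType K) (V0 V1 : {vspace V}) (ad : 'Hom(V, 'End(V))).
Hypotheses (Hdir : directv (V0 + V1)) (Hfull : (V0 + V1)%VS = fullv).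
Hypothesis Hpar : forall a b x y, x \in par V0 V1 a -> y \in par V0 V1 b -> ad x y \in par V0 V1 (a (+) b).
Hypothesis Hanti : forall a b x y, x \in par V0 V1 a -> y \in par V0 V1 b ->
          ad x y = - (sgn K a b *: ad y x).
Hypothesis Hjac : forall a b x y z, x \in par V0 V1 a -> y \in par V0 V1 b ->
          ad x (ad y z) = ad (ad x y) z + sgn K a b *: ad y (ad x z).
Local Notation p0 := (P0 V0 V1).
Local Notation p1 := (P1 V0 V1).
Local Notation evp := (evpart V0 V1).
Local Notation odp := (odpart V0 V1).
Local Notation p0m := (p0_mem Hdir Hfull).
Local Notation p1m := (p1_mem Hdir Hfull).
Local Notation p0V0 := (p0_V0 Hdir Hfull).
Local Notation p0V1 := (p0_V1 Hdir Hfull).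
Local Notation p1V0 := (p1_V0 Hdir Hfull).
Local Notation p1V1 := (p1_V1 Hdir Hfull).
Local Notation p01' := (p01 Hdir Hfull).

Lemma sgnF a : sgn K false a = 1. Proof. by rewrite /sgn /= expr0. Qed.
Lemma sgnTF : sgn K true false = 1. Proof. by rewrite /sgn /= expr0. Qed.
Lemma sgnTT : sgn K true true = -1. Proof. by rewrite /sgn /= expr1. Qed.
Lemma sgn_neq0 a b : sgn K a b != 0.
Proof. by rewrite /sgn; case: (a && b); rewrite ?expr0 ?expr1 ?oppr_eq0 oner_eq0. Qed.

Lemma adD1 x y z : ad (x + y) z = ad x z + ad y z.
Proof. by rewrite linearD add_lfunE. Qed.
Lemma adZ1 c x z : ad (c *: x) z = c *: ad x z.
Proof. by rewrite linearZ /= lfunE. Qed.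
Lemma ad01 z : ad 0 z = 0.
Proof. by rewrite linear0 lfunE. Qed.
Lemma adN1 x z : ad (- x) z = - ad x z.
Proof. by rewrite linearN /= lfunE. Qed.
Lemma adsum1 (I : Type) (r : seq I) (P : pred I) (F : I -> V) z :
  ad (\sum_(i <- r | P i) F i) z = \sum_(i <- r | P i) ad (F i) z.
Proof. by rewrite linear_sum sum_lfunE. Qed.

Lemma evpart_pres (E : 'End(V)) : (forall u, u \in V0 -> E u \in V0) -> (forall u, u \in V1 -> E u \in V1) ->
  evp E = E /\ odp E = 0.
Proof.
move=> h0 h1; split; apply/lfunP=> v; rewrite /evpart /odpart; lfsimp.
  have a0 := h0 _ (p0m v); have a1 := h1 _ (p1m v).
  by rewrite (p0V0 a0) (p1V1 a1) -linearD /= p01'.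
have a0 := h0 _ (p0m v); have a1 := h1 _ (p1m v).
by rewrite (p0V1 a1) (p1V0 a0) addr0.
Qed.

Lemma evpart_rev (E : 'End(V)) : (forall u, u \in V0 -> E u \in V1) -> (forall u, u \in V1 -> E u \in V0) ->
  evp E = 0 /\ odp E = E.
Proof.
move=> h0 h1; split; apply/lfunP=> v; rewrite /evpart /odpart; lfsimp.
  have a0 := h0 _ (p0m v); have a1 := h1 _ (p1m v).
  by rewrite (p0V1 a0) (p1V0 a1) addr0.
have a0 := h0 _ (p0m v); have a1 := h1 _ (p1m v).
by rewrite (p0V0 a1) (p1V1 a0) addrC -linearD /= p01'.
Qed.

Lemma evpartD (E1 E2 : 'End(V)) : evp (E1 + E2) = evp E1 + evp E2.
Proof. by apply/lfunP=> v; rewrite /evpart; lfsimp; rewrite !linearD /= addrACA. Qed.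
Lemma odpartD (E1 E2 : 'End(V)) : odp (E1 + E2) = odp E1 + odp E2.
Proof. by apply/lfunP=> v; rewrite /odpart; lfsimp; rewrite !linearD /= addrACA. Qed.

Lemma evod (D : 'End(V)) : evp D + odp D = D.
Proof.
apply/lfunP=> v; rewrite /evpart /odpart; lfsimp.
have e : D v = p0 (D (p0 v)) + p1 (D (p0 v)) + (p0 (D (p1 v)) + p1 (D (p1 v))).
  by rewrite !p01' -linearD /= p01'.
by rewrite e addrACA [RHS]addrACA [p1 (D (p1 v)) + _]addrC.
Qed.

Lemma ad_ev x : x \in V0 -> evp (ad x) = ad x /\ odp (ad x) = 0.
Proof.
move=> hx; apply: evpart_pres => u hu.
  by have /= := @Hpar false false _ _ hx hu.
by have /= := @Hpar false true _ _ hx hu.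
Qed.

Lemma ad_od x : x \in V1 -> evp (ad x) = 0 /\ odp (ad x) = ad x.
Proof.
move=> hx; apply: evpart_rev => u hu.
  by have /= := @Hpar true false _ _ hx hu.
by have /= := @Hpar true true _ _ hx hu.
Qed.

Lemma ad_split x : ad x = ad (p0 x) + ad (p1 x).
Proof. by rewrite -linearD /= p01'. Qed.

Lemma ev_ad x : evp (ad x) = ad (p0 x).
Proof.
rewrite ad_split evpartD (ad_ev (p0m _)).1 (ad_od (p1m _)).1 addr0 //.
Qed.
Lemma od_ad x : odp (ad x) = ad (p1 x).
Proof.
rewrite ad_split odpartD (ad_ev (p0m _)).2 (ad_od (p1m _)).2 add0r //.
Qed.

Lemma is_der_ad y : is_der V0 V1 ad (ad y).
Proof.
split; [rewrite ev_ad | rewrite od_ad]; split.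
- by move=> a x hx; exact: (@Hpar false a _ _ (p0m y) hx).
- by move=> a x z hx; exact: (@Hjac false a _ _ _ (p0m y) hx).
- by move=> a x hx; exact: (@Hpar true a _ _ (p1m y) hx).
- by move=> a x z hx; exact: (@Hjac true a _ _ _ (p1m y) hx).
Qed.

Lemma sbr_ad (D : 'End(V)) x : is_der V0 V1 ad D -> sbr V0 V1 D (ad x) = ad (D x).
Proof.
case=> [[_ He] [_ Ho]].
have hx0 : p0 x \in par V0 V1 false by apply: p0m.
have hx1 : p1 x \in par V0 V1 true by apply: p1m.
rewrite /sbr ev_ad od_ad; move: (evod D) He Ho.
move: (evp D) (odp D) => De Do eD He Ho.
apply/lfunP=> v; lfsimp'.
have h1 : De (ad (p0 x) v) - ad (p0 x) (De v) = ad (De (p0 x)) v.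
  by rewrite (He false _ v hx0) sgnF scale1r addrK.
have h2 : De (ad (p1 x) v) - ad (p1 x) (De v) = ad (De (p1 x)) v.
  by rewrite (He true _ v hx1) sgnF scale1r addrK.
have h3 : Do (ad (p0 x) v) - ad (p0 x) (Do v) = ad (Do (p0 x)) v.
  by rewrite (Ho false _ v hx0) sgnTF scale1r addrK.
have h4 : Do (ad (p1 x) v) + ad (p1 x) (Do v) = ad (Do (p1 x)) v.
  by rewrite (Ho true _ v hx1) sgnTT scaleN1r subrK.
rewrite h1 h2 h3 h4 -eD add_lfunE -[in RHS](p01' x) (raddfD De) (raddfD Do) !adD1.
by rewrite !addrA.
Qed.

End Lie.


Section Grad.
#[local] Set Default Proof Using "All".
Variables (K : fieldType) (V : vectType K) (gr : int -> {vspace V}) (N : nat).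
Hypothesis Hbound : forall p : int, (N < absz p)%N -> gr p = 0%VS.
Hypothesis Hsum : (\sum_(i < N.*2.+1) gr (i%:Z - N%:Z))%VS = fullv.
Hypothesis HdirG : directv (\sum_(i < N.*2.+1) gr (i%:Z - N%:Z))%VS.

Let Vs (i : 'I_(N.*2.+1)) := gr (i%:Z - N%:Z).
Let defV : fullv = (\sum_(i | xpredT i) Vs i)%VS := esym Hsum.
Definition pi_ (i : 'I_(N.*2.+1)) : 'End(V) := sumv_pi_for defV i.

Lemma pi_mem i v : pi_ i v \in gr (i%:Z - N%:Z).
Proof. exact: memv_sum_pi. Qed.

Lemma pi_sum v : \sum_(i < N.*2.+1) pi_ i v = v.
Proof. exact: (sumv_pi_sum defV (memvf v)). Qed.

Lemma pi_id (j : 'I_(N.*2.+1)) v : v \in gr (j%:Z - N%:Z) -> forall i, pi_ i v = if i == j then v else 0.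
Proof.
move=> hv i; move/directv_sum_unique: HdirG => /(_ (fun i => pi_ i v) (fun i => if i == j then v else 0)).
have h1 : forall i, xpredT i -> pi_ i v \in Vs i by move=> k _; apply: pi_mem.
have h2 : forall i, xpredT i -> (if i == j then v else 0) \in Vs i.
  by move=> k _; case: eqP => [->|_]; rewrite ?mem0v.
move=> /(_ h1 h2); rewrite pi_sum -big_mkcond big_pred1_eq eqxx.
by move=> /esym /forallP /(_ i) /eqP.
Qed.

Definition proj (p : int) : 'End(V) :=
  match [pick j : 'I_(N.*2.+1) | j%:Z - N%:Z == p] with Some j => pi_ j | None => 0 end.

Lemma ord_of q : (absz q <= N)%N -> exists j : 'I_(N.*2.+1), j%:Z - N%:Z = q.
Proof.
move=> h; have h1 : (absz (q + N%:Z)%R < N.*2.+1)%N by lia.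
by exists (Ordinal h1) => /=; lia.
Qed.

Lemma proj_mem p v : proj p v \in gr p.
Proof.
rewrite /proj; case: pickP => [j /eqP <-|_]; first exact: pi_mem.
by rewrite lfunE mem0v.
Qed.

Lemma gr0 v q : v \in gr q -> (N < absz q)%N -> v = 0.
Proof. by move=> hv /Hbound e; move: hv; rewrite e memv0 => /eqP. Qed.

Lemma proj_id q v : v \in gr q -> forall p, proj p v = if p == q then v else 0.
Proof.
move=> hv p.
have [hq|hq] := leqP (absz q) N; last first.
  by rewrite (gr0 hv hq) linear0; case: eqP.
have [j hj] := ord_of hq.
have hv' : v \in gr (j%:Z - N%:Z) by rewrite hj.
rewrite /proj; case: pickP => [k /eqP hk|hn].
  rewrite (pi_id hv') -hk -hj; congr (if _ then _ else _).
  apply/eqP/eqP => e; first by rewrite e.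
  by apply/val_inj => /=; lia.
rewrite lfunE; case: eqP => // e.
by have := hn j; rewrite hj e eqxx.
Qed.

Lemma proj_ord (i : 'I_(N.*2.+1)) : proj (i%:Z - N%:Z) = pi_ i.
Proof.
rewrite /proj; case: pickP => [k /eqP hk|hn]; last by have := hn i; rewrite eqxx.
by have -> : k = i by apply/val_inj => /=; lia.
Qed.

Lemma proj_sum v : \sum_(i < N.*2.+1) proj (i%:Z - N%:Z) v = v.
Proof. by rewrite -[in RHS](pi_sum v); apply: eq_bigr => i _; rewrite proj_ord. Qed.

Lemma proj_lin p : proj p = proj p. Proof. by []. Qed.

Definition Pos : {vspace V} := (\sum_(i < N.+1) gr (i%:Z))%VS.

Lemma pos_mem q v : 0 <= q -> v \in gr q -> v \in Pos.
Proof.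
move=> hq hv; have [hN|hN] := leqP (absz q) N; last by rewrite (gr0 hv hN) mem0v.
have hi : (absz q < N.+1)%N by lia.
move: hv; apply/subvP; apply: (sumv_sup (Ordinal hi)) => //=.
by have -> : Posz (absz q) = q by lia.
Qed.

Lemma pos_dec v : v \in Pos -> exists vs : 'I_N.+1 -> V,
  (forall i, vs i \in gr (i%:Z)) /\ v = \sum_(i < N.+1) vs i.
Proof. by case/memv_sumP => vs h ->; exists vs; split => // i; apply: h. Qed.

Hypothesis Hneg : forall p, p < -1 -> gr p = 0%VS.

Lemma full_dec v : exists a b, [/\ a \in gr (-1), b \in Pos & v = a + b].
Proof.
have : v \in (gr (-1) + Pos)%VS.
  move: (memvf v); rewrite -Hsum; apply/subvP/subv_sumP => i _.
  set q := (i%:Z - N%:Z).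
  have [h1|h1] := ltrP q (-1); first by rewrite Hneg // sub0v.
  have [e|ne] := eqVneq q (-1); first by rewrite e addvSl.
  apply: subv_trans (addvSr _ _); apply/subvP => w hw; apply: (pos_mem _ hw).
  by move: h1 ne; rewrite /q; lia.
by case/memv_addP => a ha [b hb ->]; exists a, b.
Qed.

Lemma neg_pos v : v \in gr (-1) -> v \in Pos -> v = 0.
Proof.
move=> h1 /pos_dec [vs [hvs ev]].
have := proj_id h1 (-1); rewrite eqxx ev linear_sum /= => <-.
apply: big1 => i _; rewrite (proj_id (hvs i)); case: eqP => // e; lia.
Qed.

End Grad.


Section Main.
#[local] Set Default Proof Using "All".
Variables (K : fieldType) (V : vectType K) (V0 V1 : {vspace V}) (ad : 'Hom(V, 'End(V))).
Hypotheses (Hdir : directv (V0 + V1)) (Hfull : (V0 + V1)%VS = fullv).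
Hypothesis Hpar : forall a b x y, x \in par V0 V1 a -> y \in par V0 V1 b -> ad x y \in par V0 V1 (a (+) b).
Hypothesis Hanti : forall a b x y, x \in par V0 V1 a -> y \in par V0 V1 b ->
          ad x y = - (sgn K a b *: ad y x).
Hypothesis Hjac : forall a b x y z, x \in par V0 V1 a -> y \in par V0 V1 b ->
          ad x (ad y z) = ad (ad x y) z + sgn K a b *: ad y (ad x z).
Hypothesis Hsimp : forall I, graded_ideal V0 V1 ad I -> I = 0%VS \/ I = fullv.
Hypothesis Hnab : exists x y, ad x y != 0.
Variables (gr : int -> {vspace V}) (N : nat).
Hypothesis Hbound : forall p : int, (N < absz p)%N -> gr p = 0%VS.
Hypothesis Hsum : (\sum_(i < N.*2.+1) gr (i%:Z - N%:Z))%VS = fullv.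
Hypothesis HdirG : directv (\sum_(i < N.*2.+1) gr (i%:Z - N%:Z))%VS.
Hypothesis HgrZ2 : forall p, gr p = (gr p :&: V0 + gr p :&: V1)%VS.
Hypothesis Hgrad : forall p q x y, x \in gr p -> y \in gr q -> ad x y \in gr (p + q).
Hypothesis Hneg : forall p, p < -1 -> gr p = 0%VS.
Hypothesis Hm1 : gr (-1) != 0%VS.

Local Notation p0 := (P0 V0 V1).
Local Notation p1 := (P1 V0 V1).
Local Notation evp := (evpart V0 V1).
Local Notation odp := (odpart V0 V1).
Local Notation p0m := (p0_mem Hdir Hfull).
Local Notation p1m := (p1_mem Hdir Hfull).
Local Notation p0V0 := (p0_V0 Hdir Hfull).
Local Notation p0V1 := (p0_V1 Hdir Hfull).
Local Notation p1V0 := (p1_V0 Hdir Hfull).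
Local Notation p1V1 := (p1_V1 Hdir Hfull).
Local Notation p01' := (p01 Hdir Hfull).
Local Notation ZGv := (ZG V0 V1).
Local Notation prj := (proj Hsum).
Local Notation projm := (proj_mem Hbound Hsum HdirG).
Local Notation projid := (proj_id Hbound Hsum HdirG).
Local Notation projsum := (proj_sum Hbound Hsum HdirG).
Local Notation posm := (pos_mem Hbound Hsum HdirG).
Local Notation posdec := (pos_dec Hbound Hsum HdirG).
Local Notation fulldec := (full_dec Hbound Hsum HdirG Hneg).
Local Notation negpos := (neg_pos Hbound Hsum HdirG Hneg).
Local Notation grz := (gr0 Hbound Hsum HdirG).
Local Notation sbrad := (sbr_ad Hdir Hfull Hpar Hanti Hjac).
Local Notation isderad := (is_der_ad Hdir Hfull Hpar Hanti Hjac).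
Local Notation evad := (ev_ad Hdir Hfull Hpar Hanti Hjac).
Local Notation odad := (od_ad Hdir Hfull Hpar Hanti Hjac).
Local Notation evodL := (evod Hdir Hfull Hpar Hanti Hjac).
Local Notation adD := (adD1 Hdir Hfull Hpar Hanti Hjac).
Local Notation adsum := (adsum1 Hdir Hfull Hpar Hanti Hjac).
Local Notation adZ := (adZ1 Hdir Hfull Hpar Hanti Hjac).
Local Notation ad0 := (ad01 Hdir Hfull Hpar Hanti Hjac).
Local Notation pos := (Pos gr N).

Lemma grZG p : ZGv (gr p).
Proof. exact: (eq_ZG Hdir Hfull (HgrZ2 p)). Qed.

Lemma posZG : ZGv pos.
Proof.
move=> v /posdec [vs [hvs ->]]; rewrite linear_sum; apply: rpred_sum => i _.
by apply: (posm _ (grZG (hvs i))).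
Qed.

Lemma ad_inj x : ad x = 0 -> x = 0.
Proof.
pose I := lker ad.
have ZGI : ZGv I.
  move=> y; rewrite !memv_ker => /eqP hy; apply/eqP/lfunP => z; rewrite lfunE /=.
  rewrite -(p01' z) linearD /=.
  have e0 := congr1 (fun f : 'End(V) => f (p0 z)) hy; rewrite /= -{1}(p01' y) adD lfunE in e0.
  have e1 := congr1 (fun f : 'End(V) => f (p1 z)) hy; rewrite /= -{1}(p01' y) adD lfunE in e1.
  have a00 := @Hpar false false _ _ (p0m y) (p0m z).
  have a10 := @Hpar true false _ _ (p1m y) (p0m z).
  have a01 := @Hpar false true _ _ (p0m y) (p1m z).
  have a11 := @Hpar true true _ _ (p1m y) (p1m z).
  have [-> _] := indep Hdir Hfull a00 a10 e0.
  have [_ ->] := indep Hdir Hfull a11 a01 (etrans (addrC _ _) e1).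
  by rewrite addr0.
have hI : graded_ideal V0 V1 ad I.
  split; first exact: ZG_eq.
  move=> u y hy.
  have hy0 := ZGI _ hy; have hy1 := ZG_p1 Hdir Hfull ZGI hy.
  move: hy hy0 hy1; rewrite !memv_ker => /eqP h /eqP h0 /eqP h1.
  have -> : ad u y = 0.
    rewrite -(p01' y) -(p01' u) linearD /= !adD.
    rewrite (@Hanti false false _ _ (p0m u) (p0m y)) (@Hanti true false _ _ (p1m u) (p0m y)).
    rewrite (@Hanti false true _ _ (p0m u) (p1m y)) (@Hanti true true _ _ (p1m u) (p1m y)).
    by rewrite h0 h1 !lfunE /= !scaler0 oppr0 !addr0.
  by rewrite linear0.
case: (Hsimp hI) => hI0.
  move=> hx; have : x \in I by rewrite memv_ker hx eqxx.
  by rewrite hI0 memv0 => /eqP.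
case: Hnab => u [y]; have : u \in I by rewrite hI0 memvf.
by rewrite memv_ker => /eqP ->; rewrite lfunE eqxx.
Qed.

Definition brv (X A : {vspace V}) : {vspace V} :=
  (\sum_(i < \dim X) (ad (vbasis X)`_i @: A))%VS.

Lemma mem_brv (X A : {vspace V}) x a : x \in X -> a \in A -> ad x a \in brv X A.
Proof.
move=> hx ha; rewrite (coord_vbasis hx) adsum; apply: memv_sumr => i _.
by rewrite adZ; apply: memvZ; apply: memv_img.
Qed.

Lemma brv_sub (X A Y : {vspace V}) : (forall x a, x \in X -> a \in A -> ad x a \in Y) -> (brv X A <= Y)%VS.
Proof.
move=> h; apply/subv_sumP => i _; apply/subvP => w /memv_imgP [a ha ->]; apply: h => //.
by apply: vbasis_mem; apply: mem_nth; rewrite size_tuple.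
Qed.

Lemma p0_ad a c : p0 (ad a c) = ad (p0 a) (p0 c) + ad (p1 a) (p1 c).
Proof.
rewrite -{1}(p01' a) -{1}(p01' c) adD !linearD /=.
rewrite (p0V0 (@Hpar false false _ _ (p0m a) (p0m c))).
rewrite (p0V1 (@Hpar false true _ _ (p0m a) (p1m c))).
rewrite (p0V1 (@Hpar true false _ _ (p1m a) (p0m c))).
rewrite (p0V0 (@Hpar true true _ _ (p1m a) (p1m c))).
by rewrite addr0 add0r.
Qed.

Lemma brvZG (X A : {vspace V}) : ZGv X -> ZGv A -> ZGv (brv X A).
Proof.
move=> hX hA; suff /subvP h : (brv X A <= p0 @^-1: brv X A)%VS by move=> w /h; rewrite -memv_preim.
apply: brv_sub => x a hx ha.
rewrite -memv_preim p0_ad; apply: memvD; apply: mem_brv.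
- exact: hX.
- exact: hA.
- exact: (ZG_p1 Hdir Hfull hX hx).
- exact: (ZG_p1 Hdir Hfull hA ha).
Qed.

Section Gen.
Variables (A0 Y : {vspace V}).
Hypotheses (hA0 : ZGv A0) (hneg : forall y a, y \in gr (-1) -> a \in A0 -> ad y a \in A0)
  (hAY : (A0 <= Y)%VS) (hY : forall a w, a \in pos -> w \in Y -> ad a w \in Y).

Let B k := iter k (fun B => (B + brv pos B)%VS) A0.
Let BS k : B k.+1 = (B k + brv pos (B k))%VS. Proof. by []. Qed.

Let Bmono k : (B k <= B k.+1)%VS. Proof. by rewrite BS addvSl. Qed.
Let Bbrv k : (brv pos (B k) <= B k.+1)%VS. Proof. by rewrite BS addvSr. Qed.

Let Bbase k : (A0 <= B k)%VS.
Proof. by elim: k => [|k IH]; [exact: subvv | exact: subv_trans IH (Bmono k)]. Qed.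

Let BZG k : ZGv (B k).
Proof.
elim: k => [|k IH] //= w; rewrite -/(B k) => /memv_addP [b1 h1 [b2 h2 ->]].
rewrite linearD /=; apply: memvD; first by apply: (subvP (addvSl _ _)); apply: IH.
by apply: (subvP (addvSr _ _)); apply: (brvZG posZG IH).
Qed.

Let Bneg k : forall y b, y \in gr (-1) -> b \in B k -> ad y b \in B k.
Proof.
elim: k => [|k IH] //= y w hy; rewrite -/(B k) => /memv_addP [b1 h1 [b2 h2 ->]].
rewrite linearD /=; apply: memvD; first by apply: (subvP (addvSl _ _)); apply: IH.
have H : forall y' a', y' \in gr (-1) -> a' \in pos -> (y' \in V0 \/ y' \in V1) -> (a' \in V0 \/ a' \in V1) ->
    forall c, c \in B k -> ad y' (ad a' c) \in B k.+1.
  move=> y' a' hy' ha' py pa c hc.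
  have [i hi] : exists i, y' \in par V0 V1 i by case: py => h; [exists false | exists true].
  have [j hj] : exists j, a' \in par V0 V1 j by case: pa => h; [exists false | exists true].
  rewrite (Hjac _ hi hj); apply: memvD; last first.
    by apply: memvZ; apply: (subvP (Bbrv k)); apply: mem_brv => //; apply: IH.
  have [u [t [hu ht ->]]] := fulldec (ad y' a').
  rewrite adD; apply: memvD; first by apply: (subvP (Bmono k)); apply: IH.
  by apply: (subvP (Bbrv k)); apply: mem_brv.
have hy0 : p0 y \in gr (-1) by apply: grZG.
have hy1 : p1 y \in gr (-1) by exact: (ZG_p1 Hdir Hfull (@grZG (-1)) hy).
suff /subvP hs : (brv pos (B k) <= (ad y) @^-1: B k.+1)%VS by rewrite memv_preim; apply: hs.
apply: brv_sub => a c ha hc; rewrite -memv_preim.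
have ha0 : p0 a \in pos by apply: posZG.
have ha1 : p1 a \in pos by exact: (ZG_p1 Hdir Hfull posZG ha).
rewrite -(p01' y) -(p01' a). rewrite adD linearD /= !adD.
by rewrite !memvD // H // ?p0m ?p1m; (left + right); rewrite ?p0m ?p1m.
Qed.

Let Btop k : (B k <= Y)%VS.
Proof.
elim: k => [|k IH] //; rewrite BS subv_add IH /=.
by apply: brv_sub => a c ha hc; apply: hY => //; apply: (subvP IH).
Qed.

Let Bstable : exists k, (brv pos (B k) <= B k)%VS.
Proof.
set m := (\dim (fullv : {vspace V})).+1.
case: (classic (exists k, (brv pos (B k) <= B k)%VS)) => // hn; exfalso.
have hlt : forall k, (\dim (B k) < \dim (B k.+1))%N.
  move=> k; rewrite (ltn_leqif (dimv_leqif_eq (Bmono k))); apply/negP => /eqP e.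
  by apply: hn; exists k; rewrite {2}e Bbrv.
have hge : forall k, (k <= \dim (B k))%N.
  by elim=> [|k IH] //; apply: leq_ltn_trans IH (hlt k).
have := hge m; have := dimvS (subvf (B m)); rewrite /m; lia.
Qed.

Lemma gen : (forall a, a \in A0 -> a = 0) \/ (forall v, v \in Y).
Proof.
have [k hk] := Bstable.
have hI : graded_ideal V0 V1 ad (B k).
  split; first by apply: (ZG_eq Hdir Hfull); apply: BZG.
  move=> x b hb; have [u [t [hu ht ->]]] := fulldec x.
  rewrite adD; apply: memvD; first exact: Bneg.
  by apply: (subvP hk); apply: mem_brv.
case: (Hsimp hI) => e; [left | right].
  by move=> a ha; have := subvP (Bbase k) _ ha; rewrite e memv0 => /eqP.
by move=> v; apply: (subvP (Btop k)); rewrite e memvf.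
Qed.
End Gen.

Lemma pos_br a w : a \in pos -> w \in pos -> ad a w \in pos.
Proof.
move=> /posdec [as_ [has ->]] /posdec [ws [hws ->]].
rewrite adsum; apply: rpred_sum => i _; rewrite linear_sum; apply: rpred_sum => j _.
by apply: (posm _ (Hgrad (has i) (hws j))).
Qed.

Lemma gr_m1_nz : exists u, u \in gr (-1) /\ u != 0.
Proof. by exists (vpick (gr (-1))); rewrite memv_pick vpick0. Qed.

Lemma trans_s v : v \in pos -> (forall x, x \in gr (-1) -> ad x v = 0) -> v = 0.
Proof.
move=> hv hk.
pose Q := fun w => w \in pos /\ forall x, x \in gr (-1) -> ad x w = 0.
have Q0 : Q 0 by split; [apply: mem0v | move=> x _; rewrite linear0].
have QC : forall c u w, Q u -> Q w -> Q (c *: u + w).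
  move=> c u w [hu ku] [hw kw]; split; first by apply: memvD => //; apply: memvZ.
  by move=> x hx; rewrite linearD linearZ /= ku // kw // scaler0 addr0.
have [A0 hA] := exists_vspace Q0 QC.
have ZA : ZGv A0.
  move=> w /hA [hw kw]; apply/hA; split; first exact: posZG.
  move=> x hx; rewrite -(p01' x) adD.
  have hx0 : p0 x \in gr (-1) by apply: grZG.
  have hx1 : p1 x \in gr (-1) by exact: (ZG_p1 Hdir Hfull (@grZG (-1)) hx).
  have e0 := kw _ hx0; rewrite -{1}(p01' w) linearD /= in e0.
  have e1 := kw _ hx1; rewrite -{1}(p01' w) linearD /= in e1.
  have a00 := @Hpar false false _ _ (p0m x) (p0m w).
  have a01 := @Hpar false true _ _ (p0m x) (p1m w).
  have a10 := @Hpar true false _ _ (p1m x) (p0m w).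
  have a11 := @Hpar true true _ _ (p1m x) (p1m w).
  have [-> _] := indep Hdir Hfull a00 a01 e0.
  have [_ ->] := indep Hdir Hfull a11 a10 (etrans (addrC _ _) e1).
  by rewrite addr0.
have hn : forall y a, y \in gr (-1) -> a \in A0 -> ad y a \in A0.
  by move=> y a hy /hA [ha ka]; rewrite ka // mem0v.
have hAY : (A0 <= pos)%VS by apply/subvP => w /hA [].
have [h|h] := @gen A0 pos ZA hn hAY pos_br.
- by apply: h; apply/hA.
- exfalso; move/negP: Hm1; apply; rewrite -subv0; apply/subvP => u hu.
  by rewrite memv0 (negpos hu (h u)).
Qed.

Lemma irr_s (U : {vspace V}) : (U <= gr (-1))%VS -> ZGv U ->
  (forall y u, y \in gr 0 -> u \in U -> ad y u \in U) ->
  (forall u, u \in U -> u = 0) \/ (forall v, v \in gr (-1) -> v \in U).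
Proof.
move=> hU ZU hs.
have hn : forall y u, y \in gr (-1) -> u \in U -> ad y u \in U.
  move=> y u hy hu; have := Hgrad hy (subvP hU _ hu); rewrite Hneg //.
  by rewrite memv0 => /eqP ->; rewrite mem0v.
have hY : forall a w, a \in pos -> w \in (U + pos)%VS -> ad a w \in (U + pos)%VS.
  move=> a w /posdec [as_ [has ->]] /memv_addP [u hu [t ht ->]].
  rewrite linearD /=; apply: memvD; last first.
    by apply: (subvP (addvSr _ _)); apply: pos_br => //; apply: rpred_sum => i _; apply: (posm _ (has i)).
  rewrite adsum; apply: rpred_sum => i _.
  have [e|ne] := eqVneq (nat_of_ord i) 0%N.
    by apply: (subvP (addvSl _ _)); apply: hs => //; move: (has i); rewrite e.
  apply: (subvP (addvSr _ _)); apply: (posm _ (Hgrad (has i) (subvP hU _ hu))).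
  by move: ne; lia.
have [h|h] := @gen U (U + pos)%VS ZU hn (addvSl _ _) hY.
- by left.
- right => v hv; have /memv_addP [u hu [t ht ev]] := h v.
  have ht' : t \in gr (-1).
    have -> : t = v - u by rewrite ev addrAC subrr add0r.
    by apply: memvB => //; apply: (subvP hU).
  by rewrite ev (negpos ht' ht) addr0.
Qed.

Lemma gr1_nz : gr 1 != 0%VS.
Proof.
apply/negP => /eqP h1.
have hk : forall k : nat, gr (k.+1)%:Z = 0%VS.
  elim=> [|k IH] //; apply/eqP; rewrite -subv0; apply/subvP => v hv; rewrite memv0; apply/eqP.
  apply: trans_s; first exact: (posm _ hv).
  move=> x hx; have := Hgrad hx hv; have -> : (-1 + (k.+2)%:Z) = (k.+1)%:Z by lia.
  by rewrite IH memv0 => /eqP.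
have hI : graded_ideal V0 V1 ad (gr (-1)).
  split; first exact: HgrZ2.
  move=> x y hy; have [u [t [hu ht ->]]] := fulldec x.
  rewrite adD; apply: memvD.
    by have := Hgrad hu hy; rewrite Hneg // memv0 => /eqP ->; rewrite mem0v.
  move: ht => /posdec [ts [hts ->]]; rewrite adsum; apply: rpred_sum => i _.
  have [e|ne] := eqVneq (nat_of_ord i) 0%N.
    by have := Hgrad (hts i) hy; rewrite e add0r.
  have : ts i \in gr (i.-1.+1)%:Z by rewrite prednK ?lt0n //; apply: hts.
  by rewrite hk memv0 => /eqP ->; rewrite ad0 mem0v.
case: (Hsimp hI) => e; first by move/negP: Hm1; apply; rewrite e.
case: Hnab => x [y]; have := Hgrad (p := -1) (q := -1) (x := x) (y := y).
by rewrite e !memvf Hneg // memv0 => /(_ isT isT) ->.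
Qed.

Lemma ad_deg u q : u \in gr q -> derdeg gr q (ad u).
Proof. by move=> hu r w hw; rewrite addrC; apply: Hgrad. Qed.

Lemma ev_deg (D : 'End(V)) p : derdeg gr p D -> derdeg gr p (evp D) /\ derdeg gr p (odp D).
Proof.
move=> hD; split => q v hv; rewrite /evpart /odpart !add_lfunE !comp_lfunE.
  apply: memvD; [apply: grZG | apply: (ZG_p1 Hdir Hfull (@grZG _))]; apply: hD; 
    [apply: grZG | apply: (ZG_p1 Hdir Hfull (@grZG _))] => //.
apply: memvD; [apply: grZG | apply: (ZG_p1 Hdir Hfull (@grZG _))]; apply: hD;
    [apply: (ZG_p1 Hdir Hfull (@grZG _)) | apply: grZG] => //.
Qed.

Lemma ev_kill (D : 'End(V)) q : (forall v, v \in gr q -> D v = 0) ->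
  forall v, v \in gr q -> evp D v = 0 /\ odp D v = 0.
Proof.
move=> hD v hv; have h0 : p0 v \in gr q by apply: grZG.
have h1 : p1 v \in gr q by exact: (ZG_p1 Hdir Hfull (@grZG _) hv).
by rewrite /evpart /odpart !add_lfunE !comp_lfunE !hD // !linear0 addr0.
Qed.

Lemma superder_kill c (E : 'End(V)) (k : int) v : superder V0 V1 ad c E ->
  (forall w, w \in gr (-1) -> E w = 0) -> (forall w, w \in gr (k - 1) -> E w = 0) ->
  v \in gr k -> forall x, x \in gr (-1) -> ad x (E v) = 0.
Proof.
move=> [_ hE] hm1 hk hv x hx.
have hx0 : p0 x \in gr (-1) by apply: grZG.
have hx1 : p1 x \in gr (-1) by exact: (ZG_p1 Hdir Hfull (@grZG (-1)) hx).
have H : forall a xa, xa \in par V0 V1 a -> xa \in gr (-1) -> ad xa (E v) = 0.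
  move=> a xa hpa hxa; have := hE a xa v hpa.
  have hk' : ad xa v \in gr (k - 1) by rewrite addrC; apply: Hgrad.
  rewrite (hm1 _ hxa) ad0 add0r (hk _ hk') => /esym/eqP.
  by rewrite scaler_eq0 (negPf (sgn_neq0 Hdir Hfull Hpar Hanti Hjac _ _)) /= => /eqP.
by rewrite -(p01' x) adD (H false) ?(H true) ?addr0 //; [apply: p1m | apply: p0m].
Qed.

Lemma der_trans (D : 'End(V)) p : is_der V0 V1 ad D -> derdeg gr p D -> 0 <= p ->
  (forall x, x \in gr (-1) -> D x = 0) -> D = 0.
Proof.
move=> [hDe hDo] hdeg hp hm1.
have [de do_] := ev_deg hdeg.
have claim : forall k : nat, forall v, v \in gr (k%:Z - 1) -> D v = 0.
  elim=> [|k IH] v hv; first by apply: hm1.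
  have hv' : v \in gr k%:Z by move: hv; have -> : ((k.+1)%:Z - 1) = k%:Z by lia.
  have km1 := ev_kill hm1; have kk := ev_kill IH.
  have eE : evp D v = 0.
    apply: trans_s; first by apply: (posm _ (de _ _ hv')); lia.
    apply: (superder_kill (k := k%:Z) hDe) => // w hw; [exact: (km1 w hw).1 | exact: (kk w hw).1].
  have eO : odp D v = 0.
    apply: trans_s; first by apply: (posm _ (do_ _ _ hv')); lia.
    apply: (superder_kill (k := k%:Z) hDo) => // w hw; [exact: (km1 w hw).2 | exact: (kk w hw).2].
  by rewrite -(evodL D) add_lfunE eE eO addr0.
apply/lfunP => v; rewrite lfunE /=.
have [u [t [hu ht ->]]] := fulldec v; rewrite linearD /= hm1 // add0r.
move: ht => /posdec [ts [hts ->]]; rewrite linear_sum; apply: big1 => i _.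
apply: (claim i.+1); have -> : ((i.+1)%:Z - 1) = i%:Z by lia.
exact: hts.
Qed.

Definition piE p (E : 'End(V)) : 'End(V) :=
  \sum_(i < N.*2.+1) (prj ((i%:Z - N%:Z) + p) \o E \o prj (i%:Z - N%:Z))%VF.

Lemma piE_deg p E : derdeg gr p (piE p E).
Proof.
move=> q v hv; rewrite sum_lfunE; apply: rpred_sum => i _; rewrite !comp_lfunE (projid hv).
case: eqP => [->|_]; first exact: projm.
by rewrite !linear0 mem0v.
Qed.

Lemma piE_hom p p' E : derdeg gr p' E -> piE p E = if p' == p then E else 0.
Proof.
move=> hE; apply/lfunP => v; rewrite sum_lfunE.
have [<-|ne] := eqVneq p' p.
  rewrite -{2}(projsum v) linear_sum; apply: eq_bigr => i _; rewrite !comp_lfunE.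
  by rewrite (projid (hE _ _ (projm _ v))) eqxx.
rewrite lfunE; apply: big1 => i _; rewrite !comp_lfunE (projid (hE _ _ (projm _ v))).
by case: eqP => // e; move/eqP: ne; lia.
Qed.

Lemma piED p E1 E2 : piE p (E1 + E2) = piE p E1 + piE p E2.
Proof.
apply/lfunP => v; rewrite add_lfunE !sum_lfunE -big_split; apply: eq_bigr => i _.
by rewrite !comp_lfunE add_lfunE linearD.
Qed.

Lemma piE0 p : piE p 0 = 0.
Proof. by apply/lfunP => v; rewrite sum_lfunE lfunE; apply: big1 => i _; rewrite !comp_lfunE lfunE linear0. Qed.

Lemma piE_sum p (I : Type) (r : seq I) (P : pred I) (F : I -> 'End(V)) :
  piE p (\sum_(i <- r | P i) F i) = \sum_(i <- r | P i) piE p (F i).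
Proof. exact: (big_morph _ (piED p) (piE0 p)). Qed.

Lemma piE_ad p x : exists y, y \in gr p /\ piE p (ad x) = ad y.
Proof.
exists (\sum_(i < N.*2.+1) (if (i%:Z - N%:Z == p) then prj (i%:Z - N%:Z) x else 0)); split.
  by apply: rpred_sum => i _; case: eqP => [<-|_]; [apply: projm | apply: mem0v].
rewrite -{1}(projsum x) linear_sum piE_sum linear_sum; apply: eq_bigr => i _.
rewrite (piE_hom _ (ad_deg (projm _ x))); case: eqP => //.
by rewrite linear0.
Qed.

Lemma Zg_pi (W : {vspace 'End(V)}) p D : Zgraded gr W -> D \in W -> piE p D \in W.
Proof.
move=> hW hD; have [M [c [-> hc]]] := hW D hD.
rewrite piE_sum; apply: rpred_sum => i _; rewrite (piE_hom _ (hc _).2).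
by case: eqP => _; [apply: (hc _).1 | apply: mem0v].
Qed.

Lemma Zg_sum (W : {vspace 'End(V)}) D : Zgraded gr W -> D \in W ->
  exists M : nat, D = \sum_(i < M.*2.+1) piE (i%:Z - M%:Z) D.
Proof.
move=> hW hD; have [M [c [eD hc]]] := hW D hD; exists M.
rewrite {1}eD; apply: eq_bigr => i _; rewrite eD piE_sum.
rewrite (bigD1 i) //= (piE_hom _ (hc _).2) eqxx big1 ?addr0 // => j hj.
rewrite (piE_hom _ (hc _).2); case: eqP => // e.
by move/eqP: hj; case; apply/val_inj => /=; lia.
Qed.

Lemma neg_is_ad (F : {vspace 'End(V)}) :
  Zgraded gr F -> (forall p D, p < 0 -> D \in F -> derdeg gr p D -> D = 0) ->
  forall p D x o, p < 0 -> o \in F -> D = ad x + o -> derdeg gr p D -> exists y, y \in gr p /\ D = ad y.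
Proof.
move=> hF hneg p D x o hp ho eD hdeg.
have [y [hy ey]] := piE_ad p x.
exists y; split => //.
have e := piE_hom p hdeg; rewrite eqxx in e.
rewrite -e eD piED ey.
by rewrite (hneg p _ hp (Zg_pi _ hF ho) (piE_deg _ _)) addr0.
Qed.

Variables (out g : {vspace 'End(V)}).
Hypotheses (Hout1 : forall D, is_der V0 V1 ad D <-> exists x o, o \in out /\ D = ad x + o)
  (Hout2 : (limg ad :&: out = 0)%VS) (Hout3 : graded_subalg V0 V1 gr out)
  (Hg1 : (limg ad <= g)%VS) (Hg2 : forall D, D \in g -> is_der V0 V1 ad D) (Hg3 : graded_subalg V0 V1 gr g).

Lemma ad_lim x : ad x \in limg ad.
Proof. by apply: memv_img; apply: memvf. Qed.

Lemma ad_g x : ad x \in g.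
Proof. exact: (subvP Hg1 _ (ad_lim x)). Qed.

Lemma hdec D : D \in g -> exists x o, o \in (g :&: out)%VS /\ D = ad x + o.
Proof.
move=> hD; move: (Hg2 hD) => /Hout1 [x [o [ho eD]]].
exists x, o; split => //; rewrite memv_cap ho andbT.
have -> : o = D - ad x by rewrite eD addrAC subrr add0r.
by apply: memvB => //; apply: ad_g.
Qed.

Lemma main_sec :
  [/\ (limg ad + (g :&: out) = g)%VS /\ directv (limg ad + (g :&: out))%VS,
      graded_subalg V0 V1 gr (g :&: out)%VS,
      transitive_sub V0 V1 gr g,
      nonlinear_sub gr g &
      (depth_one_sub gr g /\ irreducible_sub V0 V1 gr g <->
        forall p D, p < 0 -> D \in (g :&: out)%VS -> derdeg gr p D -> D = 0)].
Proof.
case: Hg3 => [gZ2 gZ gsub]; case: Hout3 => [oZ2 oZ osub].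
have FZ : Zgraded gr (g :&: out)%VS.
  move=> D; rewrite memv_cap => /andP [hDg hDo].
  have [M eM] := Zg_sum oZ hDo.
  exists M, (fun p => piE p D); split => // p; split; last exact: piE_deg.
  by rewrite memv_cap (Zg_pi _ gZ hDg) (Zg_pi _ oZ hDo).
have [u1 [hu1 nu1]] := gr_m1_nz.
have adnz : forall u, u != 0 -> ad u != 0 by move=> u nu; apply/eqP => /ad_inj /eqP; apply/negP.
have ex1 : exists D, [/\ D \in g, derdeg gr (-1) D & D != 0].
  by exists (ad u1); split; [apply: ad_g | apply: ad_deg | apply: adnz].
split.
- split.
    apply/eqP; rewrite eqEsubv subv_add Hg1 capvSl /=; apply/subvP => D hD.
    have [x [o [ho ->]]] := hdec hD.
    by apply: memv_add => //; apply: ad_lim.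
  apply/directv_addP; apply/eqP; rewrite -subv0 -Hout2.
  exact: capvS (subvv _) (capvSr _ _).
- split => //.
  + move=> D; rewrite !memv_cap => /andP [hDg hDo].
    by rewrite gZ2 // oZ2.
  + move=> D E; rewrite !memv_cap => /andP [hDg hDo] /andP [hEg hEo].
    by rewrite gsub // osub.
- move=> p D hp hD hdeg hcomm.
  apply: (der_trans (Hg2 hD) hdeg hp) => x hx.
  apply: ad_inj; rewrite -(sbrad x (Hg2 hD)).
  by apply: hcomm; [apply: ad_g | apply: ad_deg].
- exists (ad (vpick (gr 1))); split; [apply: ad_g | apply: ad_deg; apply: memv_pick | apply: adnz].
  by rewrite vpick0 gr1_nz.
- split.
  + move=> [[hd1 _] [_ hirr]] p D hp; rewrite memv_cap => /andP [hDg hDo] hdeg.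
    have [hp1|hp1] := ltrP p (-1); first exact: (hd1 p).
    have ep : p = -1 by lia.
    subst p.
    pose W := (ad @: gr (-1))%VS.
    have h1 : forall D', D' \in W -> D' \in g /\ derdeg gr (-1) D'.
      by move=> D' /memv_imgP [u hu ->]; split; [apply: ad_g | apply: ad_deg].
    have h2 : Z2graded V0 V1 W.
      by move=> D' /memv_imgP [u hu ->]; rewrite evad; apply: memv_img; apply: grZG.
    have h3 : forall X D', X \in g -> derdeg gr 0 X -> D' \in W -> sbr V0 V1 X D' \in W.
      move=> X D' hX hX0 /memv_imgP [u hu ->]; rewrite (sbrad u (Hg2 hX)); apply: memv_img.
      by have := hX0 _ _ hu; rewrite addr0.
    case: (hirr W h1 h2 h3) => [W0 | hall].
      have : ad u1 \in W by apply: memv_img.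
      by rewrite W0 memv0 => /eqP /ad_inj /eqP; rewrite (negPf nu1).
    have /memv_imgP [u hu eD] := hall D hDg hdeg.
    apply/eqP; rewrite -memv0 -Hout2 memv_cap hDo andbT eD.
    exact: ad_lim.
  + move=> hF.
    have isad : forall p D, p < 0 -> D \in g -> derdeg gr p D -> exists y, y \in gr p /\ D = ad y.
      move=> p D hp hD hdeg; have [x [o [ho eD]]] := hdec hD.
      exact: (neg_is_ad FZ hF hp ho eD hdeg).
    split; split => //.
    * move=> p D hp hD hdeg; have hp' : p < 0 by lia.
      have [y [hy ->]] := isad p D hp' hD hdeg.
      by move: hy; rewrite Hneg // memv0 => /eqP ->; rewrite linear0.
    * move=> W hW hZ hst.
      pose U := (gr (-1) :&: (ad @^-1: W))%VS.
      have ZU : ZGv U.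
        move=> u; rewrite !memv_cap -!memv_preim => /andP [hu hadu].
        by rewrite grZG //= -evad hZ.
      have sU : forall y u, y \in gr 0 -> u \in U -> ad y u \in U.
        move=> y u hy; rewrite !memv_cap -!memv_preim => /andP [hu hadu].
        apply/andP; split; first by have := Hgrad hy hu; rewrite add0r.
        rewrite -(sbrad u (isderad y)); apply: (hst (ad y) (ad u)); [apply: ad_g | exact: ad_deg hy | exact: hadu].
      case: (irr_s (capvSl _ _) ZU sU) => [U0|Uall].
        left; apply/eqP; rewrite -subv0; apply/subvP => D hD; rewrite memv0.
        have [hDg hdeg] := hW D hD.
        have [y [hy eD]] := isad (-1) D isT hDg hdeg.
        have : y \in U by rewrite memv_cap hy -memv_preim -eD.
        by move/U0 => e; rewrite eD e linear0.
      right => D hDg hdeg.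
      have [y [hy eD]] := isad (-1) D isT hDg hdeg.
      by have := Uall y hy; rewrite memv_cap -memv_preim -eD => /andP [].
Qed.

End Main.


Theorem proposition3p11 (R : realType) (V : vectType R[i])
  (V0 V1 : {vspace V}) (ad : 'Hom(V, 'End(V))) (gr : int -> {vspace V})
  (out g : {vspace 'End(V)}) :
  simple_lie_superalgebra V0 V1 ad ->
  Zgrading V0 V1 ad gr ->
  depth_one_grading gr ->
  outer_complement V0 V1 ad gr out ->
  (limg ad <= g)%VS ->
  (forall D, D \in g -> is_der V0 V1 ad D) ->
  graded_subalg V0 V1 gr g ->
  [/\ (limg ad + (g :&: out) = g)%VS /\ directv (limg ad + (g :&: out))%VS,
      graded_subalg V0 V1 gr (g :&: out)%VS,
      transitive_sub V0 V1 gr g,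
      nonlinear_sub gr g &
      (depth_one_sub gr g /\ irreducible_sub V0 V1 gr g <->
        forall p D, p < 0 -> D \in (g :&: out)%VS -> derdeg gr p D -> D = 0)].
Proof.
move=> [[Hdir Hfull Hpar Hanti Hjac] Hnab Hsimp] [[N [Hbound Hsum HdirG]] HgrZ2 Hgrad] [Hneg Hm1]
  [Hout1 Hout2 Hout3] Hg1 Hg2 Hg3.
exact: (main_sec Hdir Hfull Hpar Hanti Hjac Hsimp Hnab Hbound Hsum HdirG HgrZ2 Hgrad Hneg Hm1 Hout1 Hout2 Hout3 Hg1 Hg2 Hg3).
Qed.
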